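(* Let $E$ be a real Banach space, $K\subset E$ nonempty, closed and convex, and $g\in\mathcal F$ a totally convex function on $E$ satisfying H1–H2. If $T:K\to\mathcal P(K)$ is a multivalued mapping with nonempty, closed, convex values which is quasi $D_g$-nonexpansive, then $\mathrm{Fix}(T)$ is closed and convex.
   Context: $\mathcal F$ is the family of functions $g:E\to\mathbb R$ that are strictly convex, lower semicontinuous and Gâteaux differentiable, with derivative $g'$. $D_g(x,y)=g(x)-g(y)-\langle x-y,g'(y)\rangle$. $v_g(x,t)=\inf\{D_g(y,x):\|y-x\|=t\}$; $g$ is totally convex if $v_g(x,t)>0$ for all $x\in E$, $t>0$; uniformly totally convex on $E$ if $\inf_{x\in A}v_g(x,t)>0$ for every $t>0$ and bounded $A\subset E$. H1: the level sets of $D_g(x,\cdot)$ are bounded for all $x$; H2: $g$ is uniformly totally convex on $E$. For nonempty closed convex $D\subset E$, $\Pi^g_D(x)$ denotes the unique minimizer of $D_g(\cdot,x)$ over $D$ (Bregman projection). $\mathrm{Fix}(T)=\{x\in K: x\in T(x)\}$. $T$ is quasi $D_g$-nonexpansive if $S(x):=\Pi^g_{T(x)}(x)$ satisfies $\mathrm{Fix}(S)\ne\emptyset$ and $D_g(p,S(x))\le D_g(p,x)$ for all $p\in\mathrm{Fix}(S)$, $x\in K$. *)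

(* Defs.v *)
From HB Require Import structures.
From mathcomp Require Import all_boot all_order all_algebra.
From mathcomp Require Import all_classical all_reals all_analysis.
Set Implicit Arguments. Unset Strict Implicit. Unset Printing Implicit Defensive.
Import Order.TTheory GRing.Theory Num.Theory.
Import numFieldNormedType.Exports.
Local Open Scope classical_set_scope.
Local Open Scope ring_scope.

Section Bregman.
Context {R : realType} {E : normedModType R}.

Definition convex (A : set E) : Prop :=
  forall x y (t : R), A x -> A y -> 0 <= t -> t <= 1 -> A (t *: x + (1 - t) *: y).

Definition strictly_convex (g : E -> R) : Prop :=
  forall x y (t : R), x != y -> 0 < t -> t < 1 ->
    g (t *: x + (1 - t) *: y) < t * g x + (1 - t) * g y.

(* g' y : the Gateaux derivative of g at y, as a function E -> R (v |-> <v, g'(y)>) *)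
Definition gderiv (g : E -> R^o) (y : E) : E -> R := fun v => derive g y v.

Definition gateaux_differentiable (g : E -> R^o) : Prop :=
  forall y : E,
    (forall v, derivable g y v) /\
    (forall u v, gderiv g y (u + v) = gderiv g y u + gderiv g y v) /\
    (forall (a : R) v, gderiv g y (a *: v) = a * gderiv g y v) /\
    continuous (gderiv g y).

Definition in_F (g : E -> R^o) : Prop :=
  strictly_convex g /\ lower_semicontinuous (fun x => (g x)%:E) /\
  gateaux_differentiable g.

Definition bregman (g : E -> R^o) (x y : E) : R :=
  g x - g y - gderiv g y (x - y).

(* modulus of total convexity, with inf over the empty set = +oo *)
Definition total_conv_modulus (g : E -> R^o) (x : E) (t : R) : \bar R :=
  ereal_inf [set (bregman g y x)%:E | y in [set y | `|y - x| = t]].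

Definition totally_convex (g : E -> R^o) : Prop :=
  forall x (t : R), 0 < t -> (0 < total_conv_modulus g x t)%E.

Definition uniformly_totally_convex (g : E -> R^o) : Prop :=
  forall (t : R) (A : set E), 0 < t -> bounded_set A ->
    (0 < ereal_inf [set total_conv_modulus g x t | x in A])%E.

Definition H1 (g : E -> R^o) : Prop :=
  forall x (r : R), bounded_set [set y | bregman g x y <= r].

Definition H2 (g : E -> R^o) : Prop := uniformly_totally_convex g.

Definition is_bregman_proj (g : E -> R^o) (D : set E) (x p : E) : Prop :=
  D p /\ forall y, D y -> bregman g p x <= bregman g y x.

Definition bregman_proj (g : E -> R^o) (D : set E) (x : E) : E :=
  get (is_bregman_proj g D x).

Definition Fix (K : set E) (T : E -> set E) : set E := [set x | K x /\ T x x].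

Definition FixS (K : set E) (S : E -> E) : set E := [set x | K x /\ S x = x].

Definition quasi_Dg_nonexpansive (g : E -> R^o) (K : set E) (T : E -> set E) : Prop :=
  let S := fun x => bregman_proj g (T x) x in
  FixS K S !=set0 /\
  forall p x, FixS K S p -> K x -> bregman g p (S x) <= bregman g p x.

End Bregman.

(* Main.v *)
Require Import Defs.
From HB Require Import structures.
From mathcomp Require Import all_boot all_order all_algebra.
From mathcomp Require Import all_classical all_reals all_analysis.
From mathcomp Require Import ring lra.
Import Order.TTheory GRing.Theory Num.Theory.
Import numFieldNormedType.Exports.
Local Open Scope classical_set_scope.
Local Open Scope ring_scope.

Section Aux.
Context {R : realType} {E : completeNormedModType R} (g : E -> R^o).
Context (gF : in_F g) (gTC : totally_convex g).

Local Notation L := (gderiv g).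
Local Notation D := (bregman g).

Lemma LD w u v : L w (u + v) = L w u + L w v.
Proof. by have [_ [h _]] := gF.2.2 w; apply: h. Qed.
Lemma LZ w a v : L w (a *: v) = a * L w v.
Proof. by have [_ [_ [h _]]] := gF.2.2 w; apply: h. Qed.
Lemma Lcont w : continuous (L w).
Proof. by have [_ [_ [_ h]]] := gF.2.2 w. Qed.
Lemma L0 w : L w 0 = 0.
Proof. by have := LZ w 0 0; rewrite scale0r mul0r. Qed.
Lemma LB w u v : L w (u - v) = L w u - L w v.
Proof. by rewrite -scaleN1r LD LZ mulN1r. Qed.

Lemma Dxx x : D x x = 0.
Proof. by rewrite /bregman !subrr L0 subrr. Qed.

Lemma D_gt0 x y : y != x -> 0 < D y x.
Proof.
move=> nxy; have t0 : 0 < `|y - x| by rewrite normr_gt0 subr_eq0.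
have h := gTC x _ t0.
rewrite -lte_fin; apply: (lt_le_trans h); apply: ereal_inf_lbound; by exists y.
Qed.

Lemma D_ge0 x y : 0 <= D y x.
Proof.
have [->|nxy] := eqVneq y x; first by rewrite Dxx.
exact/ltW/D_gt0.
Qed.

Lemma D_le0 x y : D y x <= 0 -> y = x.
Proof.
move=> h; apply/eqP; apply/negPn/negP => /D_gt0 h2.
by have := lt_le_trans h2 h; rewrite ltxx.
Qed.

Lemma g_convex a b t : 0 <= t -> t <= 1 ->
  g (t *: a + (1 - t) *: b) <= t * g a + (1 - t) * g b.
Proof.
move=> t0 t1.
have [->|nab] := eqVneq a b.
  by rewrite -scalerDl addrC subrK scale1r -mulrDl addrC subrK mul1r.
move: t0; rewrite le_eqVlt => /orP[/eqP <-|t0].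
  by rewrite scale0r add0r subr0 scale1r mul0r add0r mul1r.
move: t1; rewrite le_eqVlt => /orP[/eqP ->|t1].
  by rewrite scale1r subrr scale0r addr0 mul1r mul0r addr0.
exact/ltW/(gF.1 a b t nab t0 t1).
Qed.

Lemma vec_id (a b w : E) t :
  t *: a + (1 - t) *: b - w = t *: (a - w) + (1 - t) *: (b - w).
Proof.
rewrite !scalerBr !scalerBl !scale1r.
rewrite opprB addrA [_ - t *: w + _]addrAC -addrA.
by rewrite (addrC (t *: w)) !addrA addrK.
Qed.

Lemma ident a b t w :
  t * D a w + (1 - t) * D b w =
  t * g a + (1 - t) * g b - g (t *: a + (1 - t) *: b) + D (t *: a + (1 - t) *: b) w.
Proof.
rewrite /bregman vec_id (LD w (t *: _)) !LZ; ring.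
Qed.


Lemma D_convex a b t x : 0 <= t -> t <= 1 ->
  D (t *: a + (1 - t) *: b) x <= t * D a x + (1 - t) * D b x.
Proof. move=> t0 t1; rewrite ident; have := g_convex a b t t0 t1; lra. Qed.

Lemma pos_inf (S : set \bar R) : (0 < ereal_inf S)%E ->
  exists c : R, 0 < c /\ forall s, S s -> (c%:E <= s)%E.
Proof.
case hS: (ereal_inf S) => [r| |] h.
- exists r; split; first by rewrite -lte_fin.
  by move=> s Ss; rewrite -hS; apply: ereal_inf_lbound.
- exists 1; split => // s Ss.
  have : (+oo <= s)%E by rewrite -hS; apply: ereal_inf_lbound.
  by rewrite leye_eq => /eqP ->; rewrite leey.
- by [].
Qed.

Lemma natinv (e : R) : 0 < e -> exists N : nat, forall n, (N <= n)%N -> n.+1%:R^-1 < e.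
Proof. move=> e0; have [N _ hN] := near_infty_natSinv_lt (PosNum e0). by exists N => n /hN. Qed.

Lemma natinv_le (m n : nat) : (m <= n)%N -> n.+1%:R^-1 <= m.+1%:R^-1 :> R.
Proof. move=> mn; by rewrite lef_pV2 ?posrE ?ltr0Sn // ler_nat ltnS. Qed.

Lemma sphere u (t c : R) : 0 < t -> (forall z, `|z - u| = t -> c <= D z u) ->
  forall y, t <= `|y - u| -> c * `|y - u| <= t * D y u.
Proof.
move=> t0 hc y hy.
have s0 : 0 < `|y - u| by apply: lt_le_trans hy.
set s := `|y - u| in hy s0 *.
pose l := t / s.
have l0 : 0 <= l by rewrite divr_ge0 // ltW.
have l1 : l <= 1 by rewrite ler_pdivrMr // mul1r.
have hz : `|l *: y + (1 - l) *: u - u| = t.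
  rewrite vec_id subrr scaler0 addr0 normrZ ger0_norm // /l -/s divfK //.
  by rewrite gt_eqF.
have hD := D_convex y u l u l0 l1; rewrite Dxx mulr0 addr0 in hD.
rewrite -ler_pdivlMr // mulrAC.
exact: le_trans (hc _ hz) hD.
Qed.


Lemma proj_exists (C : set E) x : C !=set0 -> closed C -> convex C -> H2 g ->
  exists p, is_bregman_proj g C x p.
Proof.
move=> [y0 Cy0] clC cvC hH2.
pose V := [set D y x | y in C].
have hV : has_inf V.
  split; first by exists (D y0 x), y0.
  by exists 0 => _ [y _ <-]; apply: D_ge0.
pose d := inf V.
have /choice[yy hyy] : forall n : nat, exists y, C y /\ D y x < d + n.+1%:R^-1.
  move=> n; have e0 : 0 < n.+1%:R^-1 :> R by rewrite invr_gt0 ltr0Sn.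
  by have [_ [y Cy <-] hy] := inf_adherent e0 hV; exists y.
have [c1 [c10 hc1]] := pos_inf _ (gTC x _ ltr01).
have hc1' : forall z, `|z - x| = 1 -> c1 <= D z x.
  by move=> z hz; rewrite -lee_fin; apply: hc1; exists z.
pose M := Num.max 1 ((d + 1) / c1).
have hM : forall n, `|yy n - x| <= M.
  move=> n; have [Cy hy] := hyy n.
  have [h1|h1] := leP `|yy n - x| 1; first by rewrite le_max h1.
  have := sphere x _ _ ltr01 hc1' _ (ltW h1); rewrite mul1r => h2.
  rewrite le_max; apply/orP; right; rewrite ler_pdivlMr // mulrC.
  apply: le_trans h2 _; apply: ltW; apply: lt_le_trans hy _.
  by rewrite lerD2l; have := natinv_le _ _ (leq0n n); rewrite invr1.
pose A := [set u : E | `|u - x| <= M].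
have bA : bounded_set A.
  rewrite /= /bounded_near; near=> K => u Au /=.
  have := ler_normD (u - x) x; rewrite subrK => h.
  apply: le_trans h _; rewrite /A /= in Au.
  have : `|x| + M <= K by near: K; apply: nbhs_pinfty_ge; rewrite num_real.
  lra.
have cy : cvg (yy @ \oo).
  apply: cauchy_cvg; apply: cauchy_exP => e e0.
  have e20 : 0 < e / 2 by rewrite divr_gt0.
  have [c [c0 hc]] := pos_inf _ (hH2 _ _ e20 bA).
  have close : forall u y, A u -> D y u < c -> `|y - u| < e / 2.
    move=> u y Au hD; rewrite ltNge; apply/negP => hge.
    have hs : forall z, `|z - u| = e / 2 -> c <= D z u.
      move=> z hz; rewrite -lee_fin.
      have h1 : (c%:E <= total_conv_modulus g u (e / 2))%E by apply: hc; exists u.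
      apply: le_trans h1 _; apply: ereal_inf_lbound; by exists z.
    have := sphere u _ _ e20 hs _ hge.
    have : c * (e / 2) <= c * `|y - u| by rewrite ler_pM2l.
    nra.
  have [N hN] := natinv (c / 2) (divr_gt0 c0 (ltr0Sn _ 1)).
  exists (yy N); exists N => // n /= Nn.
  rewrite -ball_normE /=.
  set a := yy N; set b := yy n.
  pose m := 2^-1 *: a + (1 - 2^-1) *: b.
  have h20 : 0 <= 2^-1 :> R by rewrite invr_ge0.
  have h21 : 2^-1 <= 1 :> R by rewrite invf_le1 // ler1n.
  have Cm : C m by apply: cvC => //; [case: (hyy N)|case: (hyy n)].
  have dm : d <= D m x by apply: (ge_inf hV.2); exists m.
  have Am : A m.
    rewrite /A /= /m vec_id; apply: le_trans (ler_normD _ _) _.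
    rewrite !normrZ !ger0_norm //; last by rewrite subr_ge0.
    have := hM N; have := hM n; rewrite -/a -/b; lra.
  have i1 := ident a b (2^-1) m; rewrite -/m Dxx addr0 in i1.
  have i2 := ident a b (2^-1) x; rewrite -/m in i2.
  have [_ ha] := hyy N; have [_ hb] := hyy n.
  rewrite -/a in ha; rewrite -/b in hb.
  have hNn := natinv_le _ _ Nn; have hNc := hN N (leqnn N).
  have Da0 := D_ge0 m a; have Db0 := D_ge0 m b.
  have i3 : 2^-1 * D a m + (1 - 2^-1) * D b m + D m x =
            2^-1 * D a x + (1 - 2^-1) * D b x by rewrite i1 i2.
  clear i1 i2.
  move: hNn hNc ha hb; set iN := N.+1%:R^-1; set iM := n.+1%:R^-1 => hNn hNc ha hb.
  rewrite -div1r in i3.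
  have hDa : D a m < c by lra.
  have hDb : D b m < c by lra.
  have := close m a Am hDa; have := close m b Am hDb.
  have := ler_normD (a - m) (m - b); rewrite addrA subrK (distrC m b).
  lra.
set p := lim (yy @ \oo).
have yyp : yy @ \oo --> p := cy.
have Cp : C p.
  apply: (closed_cvg _ clC _ _ yyp); apply: nearW => n; by case: (hyy n).
have Dp : D p x <= d.
  rewrite leNgt; apply/negP => dp.
  set b := (D p x - d) / 4.
  have b0 : 0 < b by rewrite /b divr_gt0 // subr_gt0.
  have hb : D p x = d + 4 * b by rewrite /b; field.
  have hg : \forall q \near p, g p - b < g q.
    have hlt : ((g p - b)%:E < (g p)%:E)%E by rewrite lte_fin ltrBlDr ltrDl.
    have [W nW hW] := gF.2.1 p (g p - b) hlt.
    by apply: filterS nW => q /hW; rewrite lte_fin.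
  have hl : \forall q \near p, L x q < L x p + b.
    by apply: (cvgr_lt _ (Lcont x p)); rewrite ltrDl.
  have hq : \forall q \near p, d + 2 * b < D q x.
    apply: filterS2 hg hl => q h1 h2.
    move: hb; rewrite /bregman !LB => hb'; lra.
  have [N1 _ hN1] := yyp _ hq.
  have [N hN] := natinv b b0.
  have := hN1 (maxn N N1) (leq_maxr _ _).
  have := hN (maxn N N1) (leq_maxl _ _).
  have [_ h] := hyy (maxn N N1).
  move: h; set iM := (maxn N N1).+1%:R^-1 => h.
  rewrite /= => h1 h2.
  lra.
exists p; split => // y Cy; apply: le_trans Dp _; apply: (ge_inf hV.2); by exists y.
Unshelve. all: by end_near.
Qed.


Lemma main_sec (K : set E) (T : E -> set E) :
  closed K -> convex K -> H2 g ->
  (forall x, K x -> [/\ T x !=set0, T x `<=` K, closed (T x) & convex (T x)]) ->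
  quasi_Dg_nonexpansive g K T ->
  closed (Fix K T) /\ convex (Fix K T).
Proof.
move=> clK cvK hH2 hT hQ.
move: hQ; rewrite /quasi_Dg_nonexpansive /= => -[_ hq].
set S := fun x => bregman_proj g (T x) x.
have hS : forall x, K x -> is_bregman_proj g (T x) x (S x).
  move=> x Kx; apply: getPex; have [T0 _ clT cvT] := hT x Kx.
  exact: proj_exists.
have fixS : forall x, K x -> T x x -> S x = x.
  move=> x Kx Txx; have [_ h] := hS x Kx.
  apply: (D_le0); have := h x Txx; by rewrite Dxx.
have Sfix : forall x, K x -> S x = x -> T x x.
  by move=> x Kx Sx; have [h _] := hS x Kx; rewrite Sx in h.
have FixFS : forall p, Fix K T p -> FixS K S p.
  by move=> p [Kp Tp]; split => //; apply: fixS.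
split.
- move=> x clx.
  have Kx : K x by apply: clK; apply: closureS clx => y [].
  pose w := S x.
  pose phi := fun q => gderiv g x q - gderiv g w q +
     (- g w + gderiv g w w + g x - gderiv g x x).
  have cphi : continuous phi.
    move=> q; apply: cvgD; last exact: cvg_cst.
    by apply: cvgB; apply: Lcont.
  have clF : closed [set q | phi q <= 0].
    have := (continuous_closedP phi).1 cphi _ (@closed_le _ 0).
    by [].
  have sub : Fix K T `<=` [set q | phi q <= 0].
    move=> q Fq; have := hq q x (FixFS q Fq) Kx.
    rewrite /phi /= /bregman !LB -/w; lra.
  have := clF x (closureS sub clx); rewrite /phi /= => h.
  have h2 : bregman g x w <= 0.
    by rewrite /bregman LB; lra.
  split => //; apply: Sfix => //.
  by symmetry; exact: (D_le0 _ _ h2).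
- move=> x y t [Kx Tx] [Ky Ty] t0 t1.
  set z := t *: x + (1 - t) *: y.
  have Kz : K z by apply: cvK.
  have h1 := hq x z (FixFS x (conj Kx Tx)) Kz.
  have h2 := hq y z (FixFS y (conj Ky Ty)) Kz.
  have i1 := ident x y t (S z); rewrite -/z in i1.
  have i2 := ident x y t z; rewrite -/z Dxx addr0 in i2.
  have h1' : t * bregman g x (S z) <= t * bregman g x z by rewrite ler_wpM2l.
  have h2' : (1 - t) * bregman g y (S z) <= (1 - t) * bregman g y z.
    by rewrite ler_wpM2l // subr_ge0.
  have h3 : bregman g z (S z) <= 0.
    have i3 : t * bregman g x (S z) + (1 - t) * bregman g y (S z) =
       t * bregman g x z + (1 - t) * bregman g y z + bregman g z (S z).
      by rewrite i1 i2.
    lra.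
  split => //; apply: Sfix => //.
  by symmetry; exact: (D_le0 _ _ h3).
Qed.

End Aux.

Theorem proposition2p10 (R : realType) (E : completeNormedModType R)
  (K : set E) (g : E -> R^o) (T : E -> set E) :
  K !=set0 -> closed K -> convex K ->
  in_F g -> totally_convex g -> H1 g -> H2 g ->
  (forall x, K x -> [/\ T x !=set0, T x `<=` K, closed (T x) & convex (T x)]) ->
  quasi_Dg_nonexpansive g K T ->
  closed (Fix K T) /\ convex (Fix K T).
Proof.
move=> _ clK cvK gF gTC _ hH2 hT hQ.
have := main_sec g gF gTC K T clK cvK hH2.
move=> /(_ hT); apply; exact: hQ.
Qed.
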